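(* Let $\mathbf i=(I,\varepsilon,d)$ be a feed, $k\in I$, and $\mathbf i'=(I,\varepsilon',d)$ its mutation in direction $k$. Equip the torus $\mathcal D_{\mathbf i}$ with coordinates $(B_i,X_i)_{i\in I}$ and the Poisson structure $$\{B_i,B_j\}=0,\quad \{X_i,B_j\}=d_i^{-1}\delta_{ij}X_iB_j,\quad \{X_i,X_j\}=\widehat\varepsilon_{ij}X_iX_j,$$ and the torus $\mathcal D_{\mathbf i'}$ with coordinates $(B'_i,X'_i)$ and the same structure with $\widehat\varepsilon'_{ij}=\varepsilon'_{ij}d_j^{-1}$; equip the torus $\mathcal X_{\mathbf i}$ with coordinates $X_i$ and bracket $\{X_i,X_j\}=\widehat\varepsilon_{ij}X_iX_j$, and $\mathcal X_{\mathbf i'}$ likewise with $\widehat\varepsilon'$. Let $\mu'_k:\mathcal D_{\mathbf i}\to\mathcal D_{\mathbf i'}$ be the isomorphism given by $$(\mu'_k)^*B'_i=B_i\ (i\ne k),\quad (\mu'_k)^*B'_k=\mathbb B_k^-/B_k,\quad (\mu'_k)^*X'_k=X_k^{-1},\quad (\mu'_k)^*X'_i=X_iX_k^{[\varepsilon_{ik}]_+}\ (i\neq k),$$ and $\mu'_k:\mathcal X_{\mathbf i}\to\mathcal X_{\mathbf i'}$ the isomorphism given by the last two formulas. Then both maps $\mu'_k$ are Poisson maps.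
   Context: A feed $\mathbf i=(I,\varepsilon,d)$: $I$ a finite set, $\varepsilon=(\varepsilon_{ij})_{i,j\in I}$ an integer matrix, $d=(d_i)$ positive integers such that $\widehat\varepsilon_{ij}:=\varepsilon_{ij}d_j^{-1}$ is skew-symmetric. Its mutation in direction $k$ is $\mathbf i'=(I,\varepsilon',d)$ with $\varepsilon'_{ij}=-\varepsilon_{ij}$ if $i=k$ or $j=k$; $\varepsilon'_{ij}=\varepsilon_{ij}$ if $\varepsilon_{ik}\varepsilon_{kj}\le0$; $\varepsilon'_{ij}=\varepsilon_{ij}+|\varepsilon_{ik}|\varepsilon_{kj}$ if $\varepsilon_{ik}\varepsilon_{kj}>0$. Notation: $[\alpha]_+=\max(\alpha,0)$, $\mathbb B_k^-:=\prod_{j:\varepsilon_{kj}<0}B_j^{-\varepsilon_{kj}}$, $\delta_{ij}$ the Kronecker delta. All tori are split algebraic tori $\mathbb G_m^{I}$ (resp. $\mathbb G_m^{2|I|}$). *)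

(* Defs.v *)
From HB Require Import structures.
From mathcomp Require Import all_boot all_order all_algebra.
From mathcomp.multinomials Require Import freeg.

Set Implicit Arguments.
Unset Strict Implicit.
Unset Printing Implicit Defensive.

Import Order.TTheory GRing.Theory Num.Theory.
Local Open Scope ring_scope.

(* Coordinate ring of the split torus G_m^J over R:                   *)
(* Laurent polynomials R[x_j^{+-1} : j in J] = group algebra of Z^J,  *)
Definition expo (J : finType) := {ffun J -> int}.
Definition Laurent (R : nzRingType) (J : finType) := {freeg (expo J) / R}.

Definition mono (R : nzRingType) (J : finType) (a : expo J) : Laurent R J := << a >>.

Definition coordf (R : nzRingType) (J : finType) (j : J) : Laurent R J :=
  mono R [ffun i => ((i == j) : nat)%:Z].

Definition lmul (R : nzRingType) (J : finType) (f g : Laurent R J) : Laurent R J :=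
  fglift (fun a : expo J => fglift (fun b : expo J => mono R (a + b)) g) f.

(* Euler derivation x_j d/dx_j *)
Definition euler (R : nzRingType) (J : finType) (j : J) (f : Laurent R J) : Laurent R J :=
  fglift (fun a : expo J => (a j)%:~R *: mono R a) f.

(* The (log-canonical) Poisson bracket with {x_i, x_j} = Om i j x_i x_j:
   {f, g} = sum_{i,j} Om i j x_i x_j (d_i f) (d_j g)
          = sum_{i,j} Om i j (x_i d_i f) (x_j d_j g). *)
Definition pbracket (R : nzRingType) (J : finType) (Om : J -> J -> R)
    (f g : Laurent R J) : Laurent R J :=
  \sum_(i : J) \sum_(j : J) Om i j *: lmul (euler i f) (euler j g).

(* Pullback along the monomial morphism of tori phi : G_m^J -> G_m^J'
   with phi^* y_j' = x^(P j'): the algebra map y^c |-> x^(sum_j' c_j' P j'). *)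
Definition pullback (R : nzRingType) (J J' : finType) (P : J' -> expo J)
    (f : Laurent R J') : Laurent R J :=
  fglift (fun c : expo J' => mono R (\sum_(j : J') (P j) *~ (c j))) f.

Definition is_poisson_map (R : nzRingType) (J J' : finType)
    (Om : J -> J -> R) (Om' : J' -> J' -> R) (P : J' -> expo J) : Prop :=
  forall f g : Laurent R J',
    pullback P (pbracket Om' f g) = pbracket Om (pullback P f) (pullback P g).

Definition epshat (R : numFieldType) (I : finType) (eps : I -> I -> int)
    (d : I -> nat) (i j : I) : R :=
  (eps i j)%:~R / (d j)%:R.

Definition is_feed (R : numFieldType) (I : finType) (eps : I -> I -> int)
    (d : I -> nat) : Prop :=
  (forall i, (0 < d i)%N) /\
  (forall i j, epshat R eps d i j = - epshat R eps d j i).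

Definition mutate (I : finType) (eps : I -> I -> int) (k : I) (i j : I) : int :=
  if (i == k) || (j == k) then - eps i j
  else if 0 < eps i k * eps k j then eps i j + `|eps i k| * eps k j
  else eps i j.

Definition pos_part (a : int) : int := Num.max a 0.

(* The torus D_i : coordinates indexed by I + I, inl i = B_i, inr i = X_i.
   {B_i,B_j} = 0, {X_i,B_j} = d_i^{-1} delta_ij X_i B_j
   (hence {B_j,X_i} = - d_i^{-1} delta_ij B_j X_i by skew-symmetry),
   {X_i,X_j} = epshat_ij X_i X_j. *)
Definition OmD (R : numFieldType) (I : finType) (eps : I -> I -> int)
    (d : I -> nat) (u v : (I + I)%type) : R :=
  match u, v with
  | inl _, inl _ => 0
  | inr i, inl j => if i == j then (d i)%:R^-1 else 0
  | inl j, inr i => if i == j then - (d i)%:R^-1 else 0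
  | inr i, inr j => epshat R eps d i j
  end.

Definition OmX (R : numFieldType) (I : finType) (eps : I -> I -> int)
    (d : I -> nat) (i j : I) : R :=
  epshat R eps d i j.

Definition evec (J : finType) (j : J) : expo J := [ffun i => ((i == j) : nat)%:Z].

(* mu'_k on D_i: exponent vectors of (mu'_k)^* B'_i, (mu'_k)^* X'_i. *)
Definition muD (I : finType) (eps : I -> I -> int) (k : I) (u : (I + I)%type) : expo (I + I)%type :=
  match u with
  | inl i =>
      if i == k then
        (* BB_k^- / B_k  with  BB_k^- = prod_{j : eps_kj < 0} B_j^{-eps_kj} *)
        [ffun z => match z with
                   | inl j => (if eps k j < 0 then - eps k j else 0) - ((j == k) : nat)%:Z
                   | inr _ => 0
                   end]
      else evec (inl i)
  | inr i =>
      if i == k then - evec (inr k)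
      else evec (inr i) + evec (inr k) *~ pos_part (eps i k)
  end.

Definition muX (I : finType) (eps : I -> I -> int) (k : I) (i : I) : expo I :=
  if i == k then - evec k
  else evec i + evec k *~ pos_part (eps i k).

(* Main.v *)
Require Import Defs.
From HB Require Import structures.
From mathcomp Require Import all_boot all_order all_algebra.
From mathcomp.multinomials Require Import freeg.
From mathcomp Require Import ring.
Set Implicit Arguments.
Unset Strict Implicit.
Unset Printing Implicit Defensive.
Import Order.TTheory GRing.Theory Num.Theory.
Local Open Scope ring_scope.

Section Gen.
Variable R : numFieldType.

Lemma fgliftD (K : choiceType) (M : lmodType R) (F : K -> M) (x y : {freeg K / R}) :
  fglift F (x + y) = fglift F x + fglift F y.
Proof.
have h : forall a b, fglift F (a - b) = fglift F a - fglift F b := lift_is_additive F.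
have h0 : fglift F 0 = 0.
  by move: (h x x); rewrite !subrr.

have hN : fglift F (- y) = - fglift F y.
  by move: (h 0 y); rewrite h0 !sub0r.
by move: (h x (- y)); rewrite opprK hN opprK.
Qed.

Lemma fglift0 (K : choiceType) (M : lmodType R) (F : K -> M) :
  fglift F (0 : {freeg K / R}) = 0.
Proof. by have := fgliftD F 0 0; rewrite addr0 => /eqP; rewrite -subr_eq subrr eq_sym => /eqP. Qed.

Lemma fglift_sum (K : choiceType) (M : lmodType R) (F : K -> M) (T : Type) (s : seq T)
   (G : T -> {freeg K / R}) :
  fglift F (\sum_(z <- s) G z) = \sum_(z <- s) fglift F (G z).
Proof.
elim: s => [|a s IH]; first by rewrite !big_nil fglift0.
by rewrite !big_cons fgliftD IH.
Qed.

Lemma freegZU (K : choiceType) (c k : R) (x : K) :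
  c *: << k *g x >> = << (c * k) *g x >> :> {freeg K / R}.
Proof. by apply/eqP/freeg_eqP => y; rewrite coeffZ !coeffU mulrA. Qed.

Lemma freeg_sumZ (K : choiceType) (D : {freeg K / R}) :
  D = \sum_(z <- dom D) coeff z D *: << z >>.
Proof.
rewrite -{1}[D]freeg_sumE; apply: eq_bigr => z _.
by rewrite freegZU mulr1.
Qed.

Lemma fgliftZ (K : choiceType) (M : lmodType R) (F : K -> M) (c : R) (D : {freeg K / R}) :
  fglift F (c *: D) = c *: fglift F D.
Proof.
rewrite -[D]freeg_sumE scaler_sumr !fglift_sum scaler_sumr.
by apply: eq_bigr => z _; rewrite freegZU !liftU scalerA.
Qed.

Lemma fglift1 (K : choiceType) (M : lmodType R) (F : K -> M) (z : K) :
  fglift F << z >> = F z.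
Proof. by rewrite liftU scale1r. Qed.


Definition lin (J J' : finType) (phi : Laurent R J -> Laurent R J') :=
  forall (c : R) x y, phi (c *: x + y) = c *: phi x + phi y.

Lemma lin0 (J J' : finType) phi : @lin J J' phi -> phi 0 = 0.
Proof.
move=> h; have := h (-1) 0 0.
by rewrite scaler0 addr0 scaleN1r addNr.
Qed.

Lemma linZ (J J' : finType) phi : @lin J J' phi -> forall c x, phi (c *: x) = c *: phi x.
Proof. by move=> h c x; have := h c x 0; rewrite addr0 lin0 // addr0. Qed.

Lemma lin_sum (J J' : finType) phi (T : Type) (s : seq T) (c : T -> R) G :
  @lin J J' phi -> phi (\sum_(z <- s) c z *: G z) = \sum_(z <- s) c z *: phi (G z).
Proof.
move=> h; elim: s => [|a s IH]; first by rewrite !big_nil lin0.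
by rewrite !big_cons h IH.
Qed.

Lemma lin_fglift (J J' : finType) (F : expo J -> Laurent R J') : lin (fglift F).
Proof. by move=> c x y; rewrite fgliftD fgliftZ. Qed.

Lemma lin_euler (J : finType) (j : J) : lin (@euler R J j).
Proof. exact: lin_fglift. Qed.

Lemma lin_lmull (J : finType) (g : Laurent R J) : lin (fun f => lmul f g).
Proof. exact: lin_fglift. Qed.

Lemma lmul_dom (J : finType) (f g : Laurent R J) :
  lmul f g = \sum_(z <- dom f) coeff z f *: fglift (fun b => mono R (z + b)) g.
Proof.
rewrite /lmul {1}(freeg_sumZ f) fglift_sum; apply: eq_bigr => z _.
by rewrite fgliftZ fglift1.
Qed.

Lemma lin_lmulr (J : finType) (f : Laurent R J) : lin (lmul f).
Proof.
move=> c x y; rewrite !lmul_dom scaler_sumr -big_split; apply: eq_bigr => z _ /=.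
by rewrite fgliftD fgliftZ scalerDr !scalerA mulrC.
Qed.

Lemma lin_pbl (J : finType) Om (g : Laurent R J) : lin (fun f => pbracket Om f g).
Proof.
move=> c x y; rewrite /pbracket scaler_sumr -big_split; apply: eq_bigr => i _ /=.
rewrite scaler_sumr -big_split; apply: eq_bigr => j _ /=.
by rewrite lin_euler (lin_lmull _) scalerDr !scalerA mulrC.
Qed.

Lemma lin_pbr (J : finType) Om (f : Laurent R J) : lin (pbracket Om f).
Proof.
move=> c x y; rewrite /pbracket scaler_sumr -big_split; apply: eq_bigr => i _ /=.
rewrite scaler_sumr -big_split; apply: eq_bigr => j _ /=.
by rewrite lin_euler (lin_lmulr _) scalerDr !scalerA mulrC.
Qed.

Lemma lin_pullback (J J' : finType) (P : J' -> expo J) : lin (@pullback R J J' P).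
Proof. exact: lin_fglift. Qed.

Lemma euler_mono (J : finType) (j : J) (a : expo J) :
  euler j (mono R a) = (a j)%:~R *: mono R a.
Proof. by rewrite /euler /mono fglift1. Qed.

Lemma lmul_mono (J : finType) (a b : expo J) :
  lmul (mono R a) (mono R b) = mono R (a + b).
Proof. by rewrite /lmul /mono !fglift1. Qed.

Lemma pbracket_mono (J : finType) Om (a b : expo J) :
  pbracket Om (mono R a) (mono R b) =
  (\sum_i \sum_j Om i j * (a i)%:~R * (b j)%:~R) *: mono R (a + b).
Proof.
rewrite /pbracket scaler_suml; apply: eq_bigr => i _.
rewrite scaler_suml; apply: eq_bigr => j _.
rewrite !euler_mono (linZ (lin_lmull _)) (linZ (lin_lmulr _)) lmul_mono.
rewrite !scalerA; congr (_ *: _); ring.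
Qed.

Lemma pullback_mono (J J' : finType) (P : J' -> expo J) (c : expo J') :
  pullback P (mono R c) = mono R (\sum_j P j *~ c j).
Proof. by rewrite /pullback /mono fglift1. Qed.


Lemma freeg_sumM (J : finType) (D : Laurent R J) :
  D = \sum_(z <- dom D) coeff z D *: mono R z.
Proof. exact: freeg_sumZ. Qed.

Lemma poisson_mono (J J' : finType) Om Om' (P : J' -> expo J) :
  (forall a b, pullback P (pbracket Om' (mono R a) (mono R b)) =
     pbracket Om (pullback P (mono R a)) (pullback P (mono R b))) ->
  is_poisson_map Om Om' P.
Proof.
move=> H f g.
rewrite [f]freeg_sumM [g]freeg_sumM.
set sf := dom f; set sg := dom g; set cf := fun z => coeff z f; set cg := fun z => coeff z g.
rewrite (lin_sum _ _ _ (lin_pbl Om' _)).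
rewrite (lin_sum _ _ _ (lin_pullback P)).
rewrite (lin_sum _ _ _ (lin_pullback P)).
rewrite (lin_sum _ _ _ (lin_pbl Om _)).
apply: eq_bigr => z _; congr (_ *: _).
rewrite (lin_sum _ _ _ (lin_pbr Om' _)).
rewrite (lin_sum _ _ _ (lin_pullback P)).
rewrite (lin_sum _ _ _ (lin_pullback P)).
rewrite (lin_sum _ _ _ (lin_pbr Om _)).
by apply: eq_bigr => w _; rewrite H.
Qed.

Lemma poisson_of_mat (J J' : finType) (Om : J -> J -> R) (Om' : J' -> J' -> R)
    (P : J' -> expo J) :
  (forall u v, Om' u v = \sum_p \sum_q (P u p)%:~R * Om p q * (P v q)%:~R) ->
  is_poisson_map Om Om' P.
Proof.
move=> H; apply: poisson_mono => a b.
rewrite pbracket_mono (linZ (lin_pullback P)) !pullback_mono pbracket_mono.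
have -> : \sum_j P j *~ (a + b) j = \sum_j P j *~ a j + \sum_j P j *~ b j.
  by rewrite -big_split; apply: eq_bigr => j _; rewrite ffunE mulrzDr.
congr (_ *: _).
have E : forall (c : expo J') i,
    ((\sum_j P j *~ c j) i)%:~R = \sum_u (P u i)%:~R * (c u)%:~R :> R.
  move=> c i; rewrite sum_ffunE rmorph_sum; apply: eq_bigr => u _.
  by rewrite /= ffunMzE mulrzz intrM.
transitivity (\sum_i \sum_j Om i j * (\sum_u (P u i)%:~R * (a u)%:~R) * (\sum_u (P u j)%:~R * (b u)%:~R)); last first.
  by apply: eq_bigr => i _; apply: eq_bigr => j _; rewrite !E.
transitivity (\sum_u \sum_v \sum_p \sum_q
   ((P u p)%:~R * Om p q * (P v q)%:~R * ((a u)%:~R * (b v)%:~R) : R)).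
  apply: eq_bigr => u _; apply: eq_bigr => v _.
  by rewrite H -mulrA mulr_suml; apply: eq_bigr => p _; rewrite mulr_suml.
transitivity (\sum_p \sum_q \sum_u \sum_v
   ((P u p)%:~R * Om p q * (P v q)%:~R * ((a u)%:~R * (b v)%:~R) : R)); last first.
  apply: eq_bigr => p _; apply: eq_bigr => q _.
  rewrite [Om p q * _]mulr_sumr mulr_suml; apply: eq_bigr => u _.
  rewrite mulr_sumr; apply: eq_bigr => v _; ring.
under eq_bigr => u _ do rewrite exchange_big.
rewrite exchange_big; apply: eq_bigr => p _.
under eq_bigr => u _ do rewrite exchange_big.
by rewrite exchange_big.
Qed.

End Gen.
Section Spec.
Variables (R : numFieldType) (I : finType) (eps : I -> I -> int) (d : I -> nat) (k : I).
Hypothesis Hf : is_feed R eps d.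

Local Notation D i := ((d i)%:R : R).
Local Notation e i j := ((eps i j)%:~R : R).

Lemma Dgt0 i : 0 < D i.
Proof. by rewrite ltr0n; case: Hf. Qed.

Lemma Dneq0 i : D i != 0.
Proof. by rewrite gt_eqF // Dgt0. Qed.

Lemma skew a b : e b a = - e a b * (D a / D b).
Proof.
case: Hf => _ /(_ b a); rewrite /epshat => h.
have ha := Dneq0 a; have hb := Dneq0 b.
apply: (mulIf (invr_neq0 ha)); rewrite h; field; exact/andP.
Qed.

Lemma sign_gt a b : (0 < eps b a) = (eps a b < 0).
Proof.
rewrite -(ltr0z R) -(ltrz0 R) skew pmulr_lgt0 ?oppr_gt0 //.
by rewrite divr_gt0 // Dgt0.
Qed.

Lemma sign_lt a b : (eps b a < 0) = (0 < eps a b).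
Proof.
rewrite -(ltr0z R) -(ltrz0 R) skew pmulr_llt0 ?oppr_lt0 //.
by rewrite divr_gt0 // Dgt0.
Qed.

Lemma sign_eq a b : (eps b a == 0) = (eps a b == 0).
Proof.
rewrite -(intr_eq0 R) -(intr_eq0 R (eps a b)) skew mulf_eq0 oppr_eq0.
by rewrite mulf_eq0 invr_eq0 !(negbTE (Dneq0 _)) !orbF.
Qed.

Lemma eps_diag a : eps a a = 0.
Proof.
case: (ltgtP (eps a a) 0) => // h.
  by move: (h); rewrite -sign_gt => h'; move: (lt_trans h h'); rewrite ltxx.
by move: (h); rewrite -sign_lt => h'; move: (lt_trans h h'); rewrite ltxx.
Qed.

Lemma pos_gt x : 0 <= x -> pos_part x = x.
Proof. by move=> h; rewrite /pos_part max_l. Qed.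

Lemma pos_le x : x <= 0 -> pos_part x = 0.
Proof. by move=> h; rewrite /pos_part max_r. Qed.


Lemma sum_delta (J : finType) (F : J -> R) j :
  \sum_p (((p == j) : nat)%:Z)%:~R * F p = F j.
Proof.
rewrite (bigD1 j) //= eqxx big1 ?addr0 ?mul1r // => p /negbTE ->.
by rewrite mul0r.
Qed.

Lemma ffunDz (J : finType) (f g : expo J) x : (f + g) x = f x + g x.
Proof. by rewrite ffunE. Qed.

Lemma ffunNz (J : finType) (f : expo J) x : (- f) x = - f x.
Proof. by rewrite ffunE. Qed.

Lemma evecE (J : finType) (j x : J) : evec j x = ((x == j) : nat)%:Z.
Proof. by rewrite /evec ffunE. Qed.

Lemma muX_sum u (F : I -> R) :
  \sum_p (muX eps k u p)%:~R * F p =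
  if u == k then - F k else F u + (pos_part (eps u k))%:~R * F k.
Proof.
rewrite /muX; case: (boolP (u == k)) => [/eqP huk|nuk]; first subst u.
  under eq_bigr do rewrite ffunNz intrN mulNr evecE.
  by rewrite sumrN sum_delta.
under eq_bigr do rewrite ffunDz ffunMzE !evecE intrD mulrDl.
rewrite big_split /= sum_delta; congr (_ + _).
under eq_bigr do rewrite mulrzz intrM -mulrA [(pos_part _)%:~R * _]mulrC mulrA.
by rewrite -big_distrl /= sum_delta mulrC.
Qed.

Lemma dbl (J : finType) (P : J -> expo J) (Om : J -> J -> R) u v :
  \sum_p \sum_q (P u p)%:~R * Om p q * (P v q)%:~R =
  \sum_p (P u p)%:~R * (\sum_q (P v q)%:~R * Om p q).
Proof.
apply: eq_bigr => p _; rewrite mulr_sumr; apply: eq_bigr => q _; ring.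
Qed.

Lemma posE_pos x : 0 < x -> pos_part x = x.
Proof. by move=> h; rewrite /pos_part max_l // ltW. Qed.
Lemma posE_neg x : x < 0 -> pos_part x = 0.
Proof. by move=> h; rewrite /pos_part max_r // ltW. Qed.
Lemma posE_0 : pos_part 0 = 0.
Proof. by []. Qed.

Lemma intr0' : ((0 : int)%:~R : R) = 0.
Proof. by []. Qed.

Ltac fin j := rewrite ?intrD ?intrM ?intrN ?intr0' ?(eps_diag k) ?intr0' 1?(skew k j);
  field; rewrite ?Dneq0 //.

Lemma coreXX i j : i != k -> j != k ->
  epshat R (mutate eps k) d i j =
  epshat R eps d i j + (pos_part (eps j k))%:~R * epshat R eps d i k +
  (pos_part (eps i k))%:~R * (epshat R eps d k j + (pos_part (eps j k))%:~R * epshat R eps d k k).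
Proof.
move=> nik njk; rewrite /epshat /mutate (negbTE nik) (negbTE njk) /=.
have [hik|hik|hik] := ltgtP (eps i k) 0.
- rewrite nmulr_rgt0 // (posE_neg hik).
  have [hkj|hkj|hkj] := ltgtP (eps k j) 0.
  + have hjk : 0 < eps j k by rewrite sign_gt.
    rewrite (posE_pos hjk) (ltr0_norm hik). fin j.
  + have hjk : eps j k < 0 by rewrite sign_lt.
    rewrite (posE_neg hjk). fin j.
  + have hjk : eps j k = 0 by apply/eqP; rewrite sign_eq hkj.
    rewrite hkj ?mulr0 ?ltxx hjk posE_0. fin j.
- rewrite pmulr_rgt0 //  (posE_pos hik).
  have [hkj|hkj|hkj] := ltgtP (eps k j) 0.
  + have hjk : 0 < eps j k by rewrite sign_gt.
    rewrite (posE_pos hjk). fin j.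
  + have hjk : eps j k < 0 by rewrite sign_lt.
    rewrite (posE_neg hjk) (gtr0_norm hik). fin j.
  + have hjk : eps j k = 0 by apply/eqP; rewrite sign_eq hkj.
    rewrite hkj ?mulr0 ?ltxx hjk posE_0. fin j.
- rewrite hik mul0r ltxx posE_0. fin j.
Qed.

Theorem partX : is_poisson_map (OmX R eps d) (OmX R (mutate eps k) d) (muX eps k).
Proof.
apply: poisson_of_mat => u v; rewrite dbl.
under eq_bigr do rewrite muX_sum.
rewrite muX_sum /OmX.
have [->|nuk] := eqVneq u k; have [->|nvk] := eqVneq v k.
- rewrite /epshat /mutate eqxx /= eps_diag. rewrite ?intrN ?intr0'; field; rewrite ?Dneq0 //.
- rewrite /epshat /mutate eqxx /= eps_diag. rewrite ?intrN ?intr0'; field; rewrite ?Dneq0 //.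
- rewrite /epshat /mutate eqxx (negbTE nuk) /= eps_diag ?orbT. rewrite ?intrN ?intr0'; field; rewrite ?Dneq0 //.
- by rewrite coreXX.
Qed.

Definition wk j : R := (if eps k j < 0 then - eps k j else 0)%:~R.

Definition LinD (u : I + I) (F : I + I -> R) : R :=
  match u with
  | inl i => if i == k then \sum_j wk j * F (inl j) - F (inl k) else F (inl i)
  | inr i => if i == k then - F (inr k)
             else F (inr i) + (pos_part (eps i k))%:~R * F (inr k)
  end.

Lemma sum0z (F : I -> R) : \sum_j ((0 : int)%:~R : R) * F j = 0.
Proof. by rewrite big1 // => j _; rewrite intr0' mul0r. Qed.

Lemma muD_sum u (F : I + I -> R) :
  \sum_p (muD eps k u p)%:~R * F p = LinD u F.
Proof.
rewrite big_sumType /=; case: u => i /=.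
- case: (boolP (i == k)) => [/eqP hik|nik]; first subst i.
  + under eq_bigr do rewrite ffunE /= intrB mulrBl.
    under [X in _ + X]eq_bigr do rewrite ffunE /=.
    by rewrite sum0z addr0 sumrB sum_delta.
  + under eq_bigr do rewrite evecE /=.
    under [X in _ + X]eq_bigr do rewrite evecE /=.
    by rewrite sum0z addr0 sum_delta.
- case: (boolP (i == k)) => [/eqP hik|nik]; first subst i.
  + under eq_bigr do rewrite ffunNz evecE /=.
    under [X in _ + X]eq_bigr do rewrite ffunNz evecE intrN mulNr /=.
    by rewrite sum0z add0r sumrN sum_delta.
  + under eq_bigr do rewrite ffunDz ffunMzE !evecE /=.
    under [X in _ + X]eq_bigr do rewrite ffunDz ffunMzE !evecE intrD mulrDl mulrzz intrM /=.
    rewrite big_split /= sum_delta.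
    under [X in _ + (_ + X)]eq_bigr do rewrite -mulrA [(pos_part _)%:~R * _]mulrC mulrA.
    rewrite -big_distrl /= sum_delta mulrC.
    by rewrite big1 ?add0r // => j _; rewrite mul0rz intr0' mul0r.
Qed.

Lemma sum_if (F : I -> R) j c : \sum_a F a * (if j == a then c else 0) = F j * c.
Proof.
rewrite (bigD1 j) //= eqxx big1 ?addr0 // => a /negbTE.
by rewrite eq_sym => ->; rewrite mulr0.
Qed.

Lemma sum_ifN (F : I -> R) j c : \sum_a F a * - (if j == a then c else 0) = - (F j * c).
Proof. by under eq_bigr do rewrite mulrN; rewrite sumrN sum_if. Qed.

Lemma sum_if_lin (F : I -> R) j j' c c' x :
  \sum_a F a * ((if j == a then c else 0) + x * (if j' == a then c' else 0)) =
  F j * c + x * (F j' * c').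
Proof.
under eq_bigr do rewrite mulrDr mulrCA.
by rewrite big_split /= sum_if -mulr_sumr sum_if.
Qed.

Lemma sum_mul0 (F : I -> R) : \sum_a F a * 0 = 0.
Proof. by rewrite big1 // => a _; rewrite mulr0. Qed.

Lemma wkk : wk k = 0.
Proof. by rewrite /wk eps_diag ltxx intr0'. Qed.

Lemma coreW j : wk j * (D j)^-1 = (pos_part (eps j k))%:~R * (D k)^-1.
Proof.
rewrite /wk; have [hkj|hkj|hkj] := ltgtP (eps k j) 0.
- have hjk : 0 < eps j k by rewrite sign_gt.
  rewrite (posE_pos hjk) intrN (skew k j); field; rewrite ?Dneq0 //.
- have hjk : eps j k < 0 by rewrite sign_lt.
  by rewrite (posE_neg hjk) intr0' !mul0r.
- have hjk : eps j k = 0 by apply/eqP; rewrite sign_eq hkj.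
  by rewrite hjk posE_0 intr0' !mul0r.
Qed.

Theorem partD : is_poisson_map (OmD R eps d) (OmD R (mutate eps k) d) (muD eps k).
Proof.
apply: poisson_of_mat => u v; rewrite dbl.
under eq_bigr do rewrite muD_sum.
rewrite muD_sum.
case: u => i; case: v => j /=.
- have [hik|nik] := eqVneq i k; have [hjk|njk] := eqVneq j k => /=; try subst i; try subst j.
  + by rewrite !(sum_mul0, subrr).
  + by rewrite !(sum_mul0, subrr).
  + by rewrite !(sum_mul0, subrr).
  + by [].
- have [hik|nik] := eqVneq i k; have [hjk|njk] := eqVneq j k => /=; try subst i; try subst j.
  + by rewrite eqxx sum_ifN wkk mul0r oppr0 opprK sub0r.
  + have nkj : (k == j) = false by rewrite eq_sym (negbTE njk).
    rewrite ?nkj ?(negbTE njk) ?eqxx sum_if_lin wkk mulrN coreW; ring.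
  + have nki : (k == i) = false by rewrite eq_sym (negbTE nik).
    by rewrite ?eqxx ?nki ?oppr0.
  + have nki : (k == i) = false by rewrite eq_sym (negbTE nik).
    by rewrite ?nki ?mulr0 ?addr0.
- have [hik|nik] := eqVneq i k; have [hjk|njk] := eqVneq j k => /=; try subst i; try subst j.
  + by rewrite eqxx sum_if wkk mul0r sub0r opprK.
  + have nkj : (k == j) = false by rewrite eq_sym (negbTE njk).
    by rewrite ?nkj ?oppr0.
    rewrite ?(negbTE nik) ?eqxx !sum_if wkk coreW; ring.
  + have nkj : (k == j) = false by rewrite eq_sym (negbTE njk).
    by rewrite ?nkj ?mulr0 ?addr0.
- have [hik|nik] := eqVneq i k; have [hjk|njk] := eqVneq j k; try subst i; try subst j.
  + rewrite /epshat /mutate eqxx /= eps_diag. rewrite ?intrN ?intr0'; field; rewrite ?Dneq0 //.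
  + rewrite /epshat /mutate eqxx /= eps_diag. rewrite ?intrN ?intr0'; field; rewrite ?Dneq0 //.
  + rewrite /epshat /mutate eqxx (negbTE nik) /= eps_diag ?orbT. rewrite ?intrN ?intr0'; field; rewrite ?Dneq0 //.
  + by rewrite coreXX.
Qed.

End Spec.

Theorem corollary2p9 (R : numFieldType) (I : finType) (eps : I -> I -> int)
    (d : I -> nat) (k : I) :
  is_feed R eps d ->
  is_poisson_map (OmD R eps d) (OmD R (mutate eps k) d) (muD eps k) /\
  is_poisson_map (OmX R eps d) (OmX R (mutate eps k) d) (muX eps k).
Proof.
move=> Hf; split; [exact: partD | exact: partX].
Qed.
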